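(* Let $V$ be finite and $n\ge2$. The functions $m_G$, as $G$ ranges over all multigraphs on $V$ without self-loops and with $|E(G)|\le n-1$, are linearly independent as functions on $(S^{n-1})^V$.
   Context: $S^{n-1}=\{x\in\mathbb{R}^n:\|x\|_2=1\}$. A multigraph on $V$ without self-loops is a finite multiset of pairs $\{u,w\}$ with $u\ne w\in V$. $m_G=\prod_{\{u,w\}\in E(G)}\langle d_u,d_w\rangle$ (with multiplicity), for $(d_u)_{u\in V}\in(S^{n-1})^V$. *)

(* Defs.v *)
From mathcomp Require Import all_boot all_order all_algebra.
From mathcomp Require Import reals.
Set Implicit Arguments. Unset Strict Implicit. Unset Printing Implicit Defensive.
Import Order.TTheory GRing.Theory Num.Theory.
Local Open Scope ring_scope.

Definition dotR {R : pzRingType} (n : nat) (x y : 'I_n -> R) : R :=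
  \sum_(i < n) x i * y i.

Definition on_sphere {R : pzRingType} (n : nat) (x : 'I_n -> R) : Prop :=
  dotR x x = 1.

(* Each unordered pair {u,w} (u <> w) is represented by its unique ordered
   representative (u,w) with enum_rank u < enum_rank w. *)
Definition multigraph (V : finType) := {ffun V * V -> nat}.

Definition loopless_multigraph (V : finType) (G : multigraph V) : Prop :=
  forall u w : V, G (u, w) != 0%N -> (enum_rank u < enum_rank w)%N.

Definition num_edges (V : finType) (G : multigraph V) : nat :=
  (\sum_(p : V * V) G p)%N.

Definition mG {R : pzRingType} (V : finType) (n : nat) (G : multigraph V)
    (d : V -> 'I_n -> R) : R :=
  \prod_(p : V * V) (dotR (d p.1) (d p.2)) ^+ (G p).

(* Main.v *)
Require Import Defs.
From mathcomp Require Import all_boot all_order all_algebra.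
From mathcomp Require Import reals.
From mathcomp Require Import ring.
Import Order.TTheory GRing.Theory Num.Theory.
Set Implicit Arguments. Unset Strict Implicit. Unset Printing Implicit Defensive.
Local Open Scope ring_scope.
Lemma card_ord_lt (n k : nat) : (k <= n)%N -> #|[pred i : 'I_n | (i < k)%N]| = k.
Proof.
move=> kn; rewrite -sum1_card.
rewrite (eq_bigl (fun i : 'I_n => true && (i < k)%N)) //.
by rewrite -(big_ord_widen_cond n xpredT (fun _ => 1%N) kn) sum1_card card_ord.
Qed.

Lemma edge_le_num (V : finType) (G : multigraph V) p : (G p <= num_edges G)%N.
Proof. by rewrite /num_edges (bigD1 p) //= leq_addr. Qed.

Lemma card_edges_q (V : finType) (n : nat) (G : multigraph V) (q : V * V) :
  (forall p, G p <= n)%N ->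
  #|[pred x : (V * V) * 'I_n | (x.2 < G x.1)%N && (x.1 == q)]| = G q.
Proof.
move=> hb.
have E : [pred x : (V * V) * 'I_n | (x.2 < G x.1)%N && (x.1 == q)] =i
   [set (q, i) | i in [pred i : 'I_n | (i < G q)%N]].
  move=> [p i]; rewrite inE /=; apply/idP/imsetP.
    move=> /andP[hi /eqP hq]; subst p; exists i => //.
  by move=> [j hj [-> ->]]; rewrite eqxx andbT.
rewrite (eq_card E) card_imset; last by move=> i j [].
exact: card_ord_lt.
Qed.

Lemma card_edges (V : finType) (n : nat) (G : multigraph V) :
  (forall p, G p <= n)%N ->
  #|[pred x : (V * V) * 'I_n | (x.2 < G x.1)%N]| = num_edges G.
Proof.
move=> hb; rewrite -sum1_card (partition_big (fun x => x.1) xpredT) //=.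
rewrite /num_edges; apply: eq_bigr => q _.
by rewrite sum1_card card_edges_q.
Qed.

Lemma sum_option (R : nmodType) (T : finType) (F : option T -> R) :
  \sum_(y : option T) F y = F None + \sum_(x : T) F (Some x).
Proof.
rewrite (bigD1 None) //=; congr (_ + _).
rewrite (eq_bigl (fun y => y \in [set Some x | x in T])); last first.
  case=> [x|] /=; last by apply/esym/imsetP => -[].
  by apply/esym/imsetP; exists x.
by rewrite big_imset //= => x y _ _ [].
Qed.
Section Constr.
Variable R : realType.
Variable V : finType.
Variable n' : nat.
Local Notation n := n'.+1.
Local Notation T := ((V * V) * 'I_n)%type.
Variable G0 : multigraph V.
Hypothesis hG0 : loopless_multigraph G0.
Hypothesis hm : (num_edges G0 <= n')%N.

Definition slot (x : T) : bool := (x.2 < G0 x.1)%N.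

Lemma G0_le p : (G0 p <= n)%N.
Proof. exact: leq_trans (edge_le_num G0 p) (leq_trans hm (leqnSn _)). Qed.

Lemma card_slot : #|slot| = num_edges G0.
Proof. exact: (card_edges (G0_le)). Qed.

Lemma slot_rank x : slot x -> (enum_rank x.1.1 < enum_rank x.1.2)%N.
Proof.
case: x => [[u w] i] /= hx; apply: hG0; rewrite -lt0n.
exact: leq_ltn_trans (leq0n _) hx.
Qed.

Lemma slot_neq x : slot x -> x.1.1 != x.1.2.
Proof. by move=> /slot_rank; apply: contraTneq => ->; rewrite ltnn. Qed.

Definition idx (x : T) : 'I_n := inord (index x (enum slot)).+1.

Lemma idx_val x : slot x -> val (idx x) = (index x (enum slot)).+1.
Proof.
move=> hx; rewrite /idx /= inordK // ltnS.
apply: leq_trans hm; rewrite -card_slot cardE index_mem mem_enum //.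
Qed.

Lemma idx_neq0 x : slot x -> val (idx x) != 0%N.
Proof. by move=> /idx_val ->. Qed.

Lemma idx_inj : {in slot &, injective idx}.
Proof.
move=> x y hx hy e; have := congr1 val e; rewrite !idx_val // => -[].
by move/(congr1 (nth x (enum slot))); rewrite !nth_index ?mem_enum.
Qed.

Definition deg (v : V) : nat :=
  (\sum_(x in slot) ((v == x.1.1) + (v == x.1.2)))%N.
Definition iso (v : V) : R := (deg v == 0%N)%:R.
Definition sv (v : V) : R := (Num.sqrt (deg v)%:R)^-1.
Definition sg (b : bool) : R := if b then -1 else 1.
Definition av (tau : {ffun T -> bool}) (v : V) (x : T) : R :=
  sv v * ((v == x.1.1)%:R * sg (tau x) + (v == x.1.2)%:R).
Definition dvec (tau : {ffun T -> bool}) (v : V) : 'I_n -> R := fun j =>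
  \sum_(x in slot) (j == idx x)%:R * av tau v x + (val j == 0%N)%:R * iso v.

Lemma dvec_idx tau v x : slot x -> dvec tau v (idx x) = av tau v x.
Proof.
move=> hx; rewrite /dvec (negPf (idx_neq0 hx)) mul0r addr0.
rewrite (bigD1 x) //= eqxx mul1r big1 ?addr0 // => y /andP[hy nyx].
by rewrite eq_sym (inj_in_eq idx_inj) // (negPf nyx) mul0r.
Qed.

Lemma dvec0 tau v (j : 'I_n) : val j = 0%N -> dvec tau v j = iso v.
Proof.
move=> j0; rewrite /dvec j0 eqxx mul1r big1 ?add0r // => x hx.
suff -> : (j == idx x) = false by rewrite mul0r.
by apply/negP => /eqP e; move: (idx_neq0 hx); rewrite -e j0.
Qed.

Lemma dvec_other tau v (j : 'I_n) :
  j \notin (ord0 |: [set idx x | x in slot]) -> dvec tau v j = 0.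
Proof.
rewrite !inE negb_or => /andP[j0 jn].
rewrite /dvec big1 ?add0r.
  have -> : (val j == 0%N) = false by apply/negP => /eqP e; case/negP: j0; apply/eqP/val_inj.
  by rewrite mul0r.
move=> x hx; case: eqP => [e|_]; last by rewrite mul0r.
by case/negP: jn; apply/imsetP; exists x.
Qed.

Lemma dot_dvec tau u w :
  dotR (dvec tau u) (dvec tau w) = \sum_(x in slot) av tau u x * av tau w x + iso u * iso w.
Proof.
rewrite /dotR (bigID (fun j => j \in (ord0 |: [set idx x | x in slot]))) /=.
rewrite [X in _ + X]big1 ?addr0; last first.
  by move=> j hj; rewrite dvec_other ?mul0r.
rewrite big_setU1 /=; last first.
  by apply/imsetP => -[x hx e]; move: (idx_neq0 hx); rewrite -e.
rewrite big_imset /=; last exact: idx_inj.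
rewrite addrC !dvec0 //; congr (_ + _); apply: eq_bigr => x hx.
by rewrite !dvec_idx.
Qed.


Lemma sg_sq b : sg b * sg b = 1.
Proof. by case: b; rewrite /sg ?mulrNN mulr1. Qed.

Lemma av_sq tau v x : slot x ->
  av tau v x * av tau v x = sv v ^+ 2 * ((v == x.1.1) + (v == x.1.2))%N%:R.
Proof.
move=> hx; have := slot_neq hx; rewrite /av.
case: x hx => [[a b] i] /= _ nab.
have sq := sg_sq (tau (a, b, i)).
case: (eqVneq v a) => [va|_]; case: (eqVneq v b) => [vb|_] //=.
- by move: nab; rewrite -va -vb eqxx.
- rewrite expr2; transitivity (sv v * sv v * (sg (tau (a, b, i)) * sg (tau (a, b, i)))); first ring.
  by rewrite sq; ring.
- by rewrite expr2; ring.
- by rewrite expr2; ring.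
Qed.

Lemma sv_ge0 v : 0 <= sv v.
Proof. by rewrite /sv invr_ge0 sqrtr_ge0. Qed.

Lemma sphere tau v : dotR (dvec tau v) (dvec tau v) = 1.
Proof.
rewrite dot_dvec (eq_bigr (fun x => sv v ^+ 2 * ((v == x.1.1) + (v == x.1.2))%N%:R)); last first.
  by move=> x hx; rewrite av_sq.
rewrite -mulr_sumr -natr_sum.
rewrite -/(deg v) /iso; case: eqP => [->|d0].
  by rewrite mulr0 add0r mulr1.
rewrite mulr0 addr0 /sv exprVn sqr_sqrtr ?ler0n // mulVf //.
by rewrite pnatr_eq0; apply/eqP.
Qed.

Definition gam (u w : V) (x : T) : R := (slot x)%:R * (sv u * sv w) *
  (((u == x.1.1) && (w == x.1.2)) || ((u == x.1.2) && (w == x.1.1)))%:R.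

Lemma gam_ge0 u w x : 0 <= gam u w x.
Proof. by rewrite /gam !mulr_ge0 ?ler0n ?sv_ge0. Qed.

Lemma dot_neq tau u w : u != w ->
  dotR (dvec tau u) (dvec tau w) = iso u * iso w + \sum_x gam u w x * sg (tau x).
Proof.
move=> uw; rewrite dot_dvec addrC; congr (_ + _).
rewrite big_mkcond /=; apply: eq_bigr => x _.
rewrite /gam unfold_in; case hx: (slot x); have hx2 := hx; rewrite /slot in hx2; rewrite hx2 {hx2}; last by rewrite !mul0r.
have := slot_neq hx; rewrite /av.
case: x hx => [[a b] i] /= _ nab.
case: (eqVneq u a) => [ua|_]; case: (eqVneq u b) => [ub|_];
case: (eqVneq w a) => [wa|_]; case: (eqVneq w b) => [wb|_] //=;
  try (by move: nab; rewrite -?ua -?ub -?wa -?wb eqxx);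
  try (by move: uw; rewrite ?ua ?ub ?wa ?wb eqxx);
  try (by move: nab; rewrite -wa -wb eqxx);
  try (by move: nab; rewrite -ua -ub eqxx);
  ring.
Qed.

Definition valid (G : multigraph V) (e : T) : bool := (e.2 < G e.1)%N.

Definition K (G : multigraph V) (e : T) (y : option T) : R :=
  if valid G e then
    (match y with None => iso e.1.1 * iso e.1.2 | Some x => gam e.1.1 e.1.2 x end)
  else (y == None)%:R.

Definition Z (tau : {ffun T -> bool}) (y : option T) : R :=
  match y with None => 1 | Some x => sg (tau x) end.

Lemma mG_prod (G : multigraph V) tau : (forall p, G p <= n)%N ->
  mG G (dvec tau) =
  \prod_(e : T) (if valid G e then dotR (dvec tau e.1.1) (dvec tau e.1.2) else 1).
Proof.
move=> hb; rewrite -(pair_big xpredT xpredT (fun (p : V * V) (i : 'I_n) =>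
   if valid G (p, i) then dotR (dvec tau p.1) (dvec tau p.2) else 1)) /=.
rewrite /mG; apply: eq_bigr => p _.
rewrite -big_mkcond /= /valid /=.
rewrite -(big_ord_widen n (fun _ => dotR (dvec tau p.1) (dvec tau p.2)) (hb p)).
by rewrite prodr_const card_ord.
Qed.

Lemma loopless_valid (G : multigraph V) e : loopless_multigraph G -> valid G e ->
  e.1.1 != e.1.2.
Proof.
move=> hG; case: e => [[a b] i] /= hv.
have : (enum_rank a < enum_rank b)%N.
  by apply: hG; rewrite -lt0n; apply: leq_ltn_trans hv.
by apply: contraTneq => ->; rewrite ltnn.
Qed.

Lemma dot_as_sum (G : multigraph V) tau e : loopless_multigraph G ->
  (if valid G e then dotR (dvec tau e.1.1) (dvec tau e.1.2) else 1) =
  \sum_(y : option T) K G e y * Z tau y.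
Proof.
move=> hG; rewrite sum_option /K /Z; case hv: (valid G e).
  by rewrite dot_neq ?(loopless_valid hG hv) // mulr1.
by rewrite mulr1 big1 ?addr0 // => x _; rewrite mul0r.
Qed.

Lemma Zprod tau (phi : {ffun T -> option T}) :
  \prod_(e : T) Z tau (phi e) =
  \prod_(x : T) sg (tau x) ^+ #|[pred e | phi e == Some x]|.
Proof.
have -> : \prod_(e : T) Z tau (phi e) =
  \prod_(e : T) \prod_(x : T) (if phi e == Some x then sg (tau x) else 1).
  apply: eq_bigr => e _; rewrite /Z; case: (phi e) => [x0|].
    rewrite (bigD1 x0) //= eqxx big1 ?mulr1 // => x hx.
    by case: eqP => // -[e']; move: hx; rewrite e' eqxx.
  by rewrite big1.
rewrite exchange_big; apply: eq_bigr => x _.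
by rewrite -big_mkcond prodr_const.
Qed.

Definition Hc (phi : {ffun T -> option T}) : R :=
  \prod_(x : T) ((-1) ^+ (slot x + #|[pred e | phi e == Some x]|) + 1).

Definition C (G : multigraph V) (phi : {ffun T -> option T}) : R :=
  \prod_(e : T) K G e (phi e).

Lemma avg_eq (G : multigraph V) : loopless_multigraph G -> (forall p, G p <= n)%N ->
  \sum_(tau : {ffun T -> bool}) (\prod_(x in slot) sg (tau x)) * mG G (dvec tau) =
  \sum_(phi : {ffun T -> option T}) C G phi * Hc phi.
Proof.
move=> hG hb.
have E1 tau : mG G (dvec tau) =
   \sum_(phi : {ffun T -> option T}) C G phi * \prod_(e : T) Z tau (phi e).
  rewrite mG_prod //.
  under eq_bigr => e _ do rewrite (dot_as_sum tau e hG).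
  rewrite bigA_distr_bigA; apply: eq_bigr => phi _.
  by rewrite big_split.
under eq_bigr => tau _ do rewrite E1 mulr_sumr.
rewrite exchange_big; apply: eq_bigr => phi _.
under eq_bigr => tau _ do rewrite mulrCA Zprod.
rewrite -mulr_sumr; congr (_ * _).
have E2 tau : (\prod_(x in slot) sg (tau x)) *
    \prod_(x : T) sg (tau x) ^+ #|[pred e | phi e == Some x]| =
    \prod_(x : T) sg (tau x) ^+ (slot x + #|[pred e | phi e == Some x]|).
  rewrite big_mkcond -big_split; apply: eq_bigr => x _ /=.
  have -> : (x \in slot) = slot x by [].
  by rewrite exprD; case: (slot x); rewrite ?expr1 ?expr0 ?mul1r.
under eq_bigr => tau _ do rewrite E2.
rewrite -(bigA_distr_bigA (fun (x : T) (b : bool) => sg b ^+ (slot x + #|[pred e | phi e == Some x]|))).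
rewrite /Hc; apply: eq_bigr => x _.
by rewrite big_bool /= expr1n addrC.
Qed.

Lemma sign_factor j : (-1) ^+ j + 1 = (if odd j then 0 else 2%:R) :> R.
Proof. by rewrite -signr_odd; case: (odd j); rewrite ?expr1 ?expr0 ?addNr. Qed.

Lemma Hc_ge0 phi : 0 <= Hc phi.
Proof.
by apply: prodr_ge0 => x _; rewrite sign_factor; case: odd; rewrite ?lexx ?ler0n.
Qed.

Lemma C_ge0 G phi : 0 <= C G phi.
Proof.
apply: prodr_ge0 => e _; rewrite /K; case: valid; last exact: ler0n.
by case: (phi e) => [x|]; rewrite ?gam_ge0 // mulr_ge0 ?ler0n.
Qed.

Lemma supp (G : multigraph V) phi : loopless_multigraph G -> (forall p, G p <= n)%N ->
  C G phi * Hc phi != 0 -> forall q, (G0 q <= G q)%N.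
Proof.
move=> hG hb; rewrite mulf_eq0 negb_or => /andP[/prodf_neq0 hC /prodf_neq0 hH] q.
have key x : slot x -> x.1 == q -> Some x \in
   [set phi e | e in [pred e : T | (e.2 < G e.1)%N && (e.1 == q)]].
  move=> hx /eqP xq.
  have := hH x isT; rewrite sign_factor hx add1n /=.
  case: (ltnP 0 #|[pred e | phi e == Some x]|) => [|h0]; last first.
    by move: h0; rewrite leqn0 => /eqP -> /=; rewrite eqxx.
  move=> /card_gt0P [e]; rewrite inE => /eqP phie _.
  have := hC e isT; rewrite /K phie.
  case hv: (valid G e); last by rewrite /= mulr0n eqxx.
  rewrite /gam hx !mul1r => /negP hg.
  apply/imsetP; exists e => //; rewrite inE.
  apply/andP; split; first exact: hv.
  have er := loopless_valid hG hv.
  have hr1 : (enum_rank e.1.1 < enum_rank e.1.2)%N.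
    by case: e {phie hg er} hv => [[a b] i] /= hv; apply: hG; rewrite -lt0n; apply: leq_ltn_trans hv.
  have hr2 := slot_rank hx.
  set cnd := (_ || _) in hg.
  case: (boolP cnd) => hc; last by case: hg; rewrite (negPf hc) mulr0.
  case/orP: hc => /andP[/eqP h1 /eqP h2].
    by rewrite -xq; case: (e.1) h1 h2 => a b /= -> ->; case: (x.1).
  by move: hr1; rewrite h1 h2 => /(ltn_trans hr2); rewrite ltnn.
rewrite -(card_edges_q q G0_le) -(card_edges_q q hb).
rewrite -(card_imset _ (@Some_inj _)).
apply: leq_trans (leq_imset_card phi _).
apply: subset_leq_card; apply/subsetP => y /imsetP [x hx ->].
by move: hx; rewrite inE => /andP[hx1 hx2]; apply: key.
Qed.

Lemma sv_gt0 v x : slot x -> (v == x.1.1) || (v == x.1.2) -> 0 < sv v.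
Proof.
move=> hx hv; rewrite /sv invr_gt0 sqrtr_gt0 ltr0n /deg.
rewrite (bigD1 x) //=; apply: leq_trans (leq_addr _ _).
by case/orP: hv => ->; rewrite ?addn0 // addnC.
Qed.

Lemma avg_pos : 0 < \sum_(phi : {ffun T -> option T}) C G0 phi * Hc phi.
Proof.
pose phi0 : {ffun T -> option T} := [ffun e => if slot e then Some e else None].
rewrite (bigD1 phi0) //=.
apply: (@lt_le_trans _ _ (C G0 phi0 * Hc phi0)); last first.
  by rewrite lerDl sumr_ge0 // => phi _; rewrite mulr_ge0 ?C_ge0 ?Hc_ge0.
apply: mulr_gt0.
  apply: prodr_gt0 => e _; rewrite /K /phi0 ffunE.
  have -> : valid G0 e = slot e by [].
  case hs: (slot e); last by rewrite /= ltr01.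
  rewrite /gam hs !eqxx /= mul1r mulr1.
  by apply: mulr_gt0; apply: (sv_gt0 hs); rewrite eqxx ?orbT.
apply: prodr_gt0 => x _.
have -> : #|[pred e | phi0 e == Some x]| = slot x.
  case hs: (slot x).
    transitivity 1%N => //; rewrite -(card1 x); apply: eq_card => e; rewrite !inE /phi0 ffunE.
    by case he: (slot e); [rewrite (inj_eq (@Some_inj _)) | apply/esym/negbTE; apply: contraFneq he => ->].
  apply: eq_card0 => e; rewrite !inE /phi0 ffunE.
  by case he: (slot e) => //; apply/eqP => -[ex]; rewrite -ex he in hs.
by rewrite sign_factor oddD addbb /= ltr0n.
Qed.
End Constr.

Lemma sub_eq (V : finType) (G0 H : multigraph V) :
  (forall p, G0 p <= H p)%N -> (num_edges H <= num_edges G0)%N -> H = G0.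
Proof.
move=> hle hn; apply/ffunP => p; apply/eqP; rewrite eqn_leq hle andbT.
rewrite leqNgt; apply/negP => hlt; move: hn; apply/negP; rewrite -ltnNge.
rewrite /num_edges (bigD1 p) //= [X in (_ < X)%N](bigD1 p) //=.
have : (\sum_(i | i != p) G0 i <= \sum_(i | i != p) H i)%N by apply: leq_sum.
move: hlt; set a := G0 p; set b := H p; set x := (\sum_(i | _) _)%N; set y := (\sum_(i | _) _)%N.
move=> h1 h2; apply: leq_trans (_ : (a + y).+1 <= b + y)%N; first by rewrite ltnS leq_add2l.
by rewrite -addSn leq_add2r.
Qed.


Theorem mainTheorem6 (R : realType) (V : finType) (n : nat) (hn : (2 <= n)%N)
    (s : seq (multigraph V)) (c : multigraph V -> R) :
  uniq s ->
  (forall G, G \in s -> loopless_multigraph G /\ (num_edges G <= n.-1)%N) ->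
  (forall d : V -> 'I_n -> R, (forall v, on_sphere (d v)) ->
     \sum_(G <- s) c G * mG G d = 0) ->
  forall G, G \in s -> c G = 0.
Proof.
case: n hn => [//|n'] hn /= us hs hsum G Gs.
have [//|cG] := eqVneq (c G) 0; exfalso.
pose P k := has (fun H => (c H != 0) && (num_edges H == k)) s.
have exP : exists k, P k.
  by exists (num_edges G); apply/hasP; exists G => //; rewrite cG eqxx.
have ubP : forall k, P k -> (k <= n')%N.
  by move=> k /hasP[H Hs /andP[_ /eqP <-]]; case: (hs H Hs).
case: (ex_maxnP exP ubP) => k /hasP[G0 G0s /andP[cG0 /eqP ek]] kmax.
have [hG0 hm] := hs G0 G0s.
have hb H : H \in s -> forall p, (H p <= n'.+1)%N.
  move=> Hs p; case: (hs H Hs) => _ h.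
  exact: leq_trans (edge_le_num H p) (leq_trans h (leqnSn _)).
have S0 : \sum_(tau : {ffun (V * V) * 'I_n'.+1 -> bool})
   (\prod_(x in slot G0) sg R (tau x)) * \sum_(H <- s) c H * mG H (dvec R G0 tau) = 0.
  apply: big1 => tau _; rewrite hsum ?mulr0 // => v.
  exact: (sphere R hG0 hm).
move: S0.
under eq_bigr => tau _ do rewrite mulr_sumr.
rewrite exchange_big /=.
under eq_bigr => H _ do (under eq_bigr => tau _ do rewrite mulrCA; rewrite -mulr_sumr).
rewrite big_seq_cond.
under eq_bigr => H /andP[Hs _] do rewrite (avg_eq R hG0 hm (proj1 (hs H Hs)) (hb H Hs)).
rewrite -big_seq_cond (bigD1_seq G0) //= [X in _ + X = _]big1_seq; last first.
  move=> H /andP[nH Hs].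
  have [cH0|cH] := eqVneq (c H) 0; first by rewrite cH0 mul0r.
  rewrite big1 ?mulr0 // => phi _.
  apply/eqP; apply/negP => /negP hne; case/negP: nH; apply/eqP.
  apply: sub_eq; first exact: (supp hG0 hm (proj1 (hs H Hs)) (hb H Hs) hne).
  rewrite ek; apply: kmax; apply/hasP; exists H => //; rewrite cH eqxx.
  by [].
rewrite addr0 => /eqP; rewrite mulf_eq0 (negPf cG0) /= => /eqP h.
by move: (avg_pos R n' G0); rewrite h ltxx.
Qed.
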